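(* Let $\mathcal{S}$ be an instance space, $\mathcal{W}$ a hypothesis space, and $\ell:\mathcal{S}\times\mathcal{W}\to\mathbb{R}^+$ a nonnegative loss. Consider a distributed learning problem with $K$ users: for each $k\in\{1,\ldots,K\}$, user $k$ holds a dataset $\mathbf{S}_k=(S_{k,1},\ldots,S_{k,n_k})$ with law $\pi_k^{\otimes n_k}$ for an (unknown) distribution $\pi_k$ on $\mathcal{S}$, the datasets $\mathbf{S}_1,\ldots,\mathbf{S}_K$ being independent; user $k$ outputs $W_k\in\mathcal{W}$ according to a conditional distribution $P_{W_k|\mathbf{S}_k}$, and a fusion algorithm outputs $\widehat W\in\mathcal{W}$ according to $P_{\widehat W|W_1,\ldots,W_K}$. Denote this distributed learning algorithm by $\mathcal{A}_K$, let $n=\sum_{k=1}^K n_k$, $\mu=\prod_{k=1}^K\pi_k$, and let $P_{\widehat W}$ be the marginal law of $\widehat W$. For each $k$, let $(\bar S_k,\bar W)\sim\pi_k\otimes P_{\widehat W}$ (independent), let $\Lambda_k(\lambda)$ be the cumulant generating function of $\ell(\bar S_k,\bar W)$, i.e. $\Lambda_k(\lambda)=\log\mathbb{E}\big[e^{\lambda(\ell(\bar S_k,\bar W)-\mathbb{E}[\ell(\bar S_k,\bar W)])}\big]$, and suppose there are $b_{k\pm}\in(0,\infty]$ and convex functions $\psi_{k\pm}:[0,b_{k\pm})\to\mathbb{R}$ with $\psi_{k\pm}(0)=\psi_{k\pm}'(0)=0$ such that $\Lambda_k(\lambda)\le\psi_{k+}(\lambda)$ for $\lambda\in[0,b_{k+})$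 and $\Lambda_k(\lambda)\le\psi_{k-}(-\lambda)$ for $\lambda\in(-b_{k-},0]$. Then \[ -\frac1n\sum_{k=1}^K\sum_{i=1}^{n_k}\psi_{k+}^{\ast-1}\big(I(S_{k,i};\widehat W)\big)\;\le\;{\rm gen}(\mu;\mathcal{A}_K)\;\le\;\frac1n\sum_{k=1}^K\sum_{i=1}^{n_k}\psi_{k-}^{\ast-1}\big(I(S_{k,i};\widehat W)\big). \]
   Context: For $w\in\mathcal{W}$, $L_{\pi_k}(w)=\mathbb{E}_{S\sim\pi_k}[\ell(S,w)]$ and $L_{\mathbf{S}_k}(w)=\frac1{n_k}\sum_{i=1}^{n_k}\ell(S_{k,i},w)$. The distributed expected risk is $L_\mu(w)=\sum_{k=1}^K\frac{n_k}{n}L_{\pi_k}(w)$, the distributed empirical risk is $L_{\mathbf{S}_K}(w)=\sum_{k=1}^K\frac{n_k}{n}L_{\mathbf{S}_k}(w)$, and the expected generalization error is ${\rm gen}(\mu;\mathcal{A}_K)=\mathbb{E}[L_\mu(\widehat W)-L_{\mathbf{S}_K}(\widehat W)]$. $I(\cdot;\cdot)$ is mutual information. For a convex $\psi:[0,b)\to\mathbb{R}$, $\psi^\ast(x)=\sup_{\lambda\in[0,b)}(\lambda x-\psi(\lambda))$ is its Legendre dual and $\psi^{\ast-1}$ the inverse of $\psi^\ast$ (on $[0,\infty)$). *)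

(* Defs.v *)
From HB Require Import structures.
From mathcomp Require Import all_boot all_order all_algebra.
From mathcomp Require Import all_classical all_reals all_analysis.
Set Implicit Arguments. Unset Strict Implicit. Unset Printing Implicit Defensive.
Import Order.TTheory GRing.Theory Num.Theory.
Local Open Scope classical_set_scope.
Local Open Scope ring_scope.

Section pairRV.
Context d d1 d2 (T : measurableType d) (T1 : measurableType d1)
  (T2 : measurableType d2).
Variables (X : {mfun T >-> T1}) (Y : {mfun T >-> T2}).
Definition pairRV : T -> T1 * T2 := fun t => (X t, Y t).
Lemma pairRV_measurable : measurable_fun setT pairRV.
Proof. exact: measurable_fun_pair. Qed.
HB.instance Definition _ :=
  isMeasurableFun.Build _ _ _ _ pairRV pairRV_measurable.
End pairRV.

Local Open Scope ereal_scope.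

Definition KL (R : realType) d (T : measurableType d) (P Q : probability T R)
  : \bar R :=
  if pselect (P `<< Q) then
    \int[P]_x lne (Radon_Nikodym_SigmaFinite.f P Q x)
  else +oo.

Definition mutual_info (R : realType) d d1 d2 (T : measurableType d)
  (T1 : measurableType d1) (T2 : measurableType d2) (P : probability T R)
  (X : {mfun T >-> T1}) (Y : {mfun T >-> T2}) : \bar R :=
  KL (distribution P (pairRV X Y))
     ((distribution P X \x distribution P Y)%E : probability _ R).

Definition cgf (R : realType) d (T : measurableType d) (Q : probability T R)
  (f : T -> R) (l : R) : \bar R :=
  lne (\int[Q]_z (expR (l * (f z - fine (\int[Q]_y (f y)%:E))))%:E).

Definition convex_on_0b (R : realType) (psi : R -> R) (b : \bar R) : Prop :=
  forall x y t : R, (0 <= x)%R -> x%:E < b -> (0 <= y)%R -> y%:E < b ->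
    (0 <= t <= 1)%R ->
    (psi (t * x + (1 - t) * y) <= t * psi x + (1 - t) * psi y)%R.

(** psi'(0) = 0, as the (right) derivative at the endpoint 0 of [0,b). *)
Definition right_deriv0_is0 (R : realType) (psi : R -> R) : Prop :=
  ((psi h - psi 0) / h @[h --> 0^'+] --> 0)%R.

Definition legendre_dual (R : realType) (psi : R -> R) (b : \bar R) (x : R)
  : \bar R :=
  ereal_sup [set ((l * x - psi l)%R)%:E | l in
              [set l : R | (0 <= l)%R /\ l%:E < b]].

(** Inverse of psi^* on [0,oo) (generalized inverse:
    psi^{*-1}(y) = inf { x >= 0 | psi^*(x) > y }). *)
Definition legendre_dual_inv (R : realType) (psi : R -> R) (b : \bar R)
  (y : \bar R) : \bar R :=
  ereal_inf [set x%:E | x in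
              [set x : R | (0 <= x)%R /\ y < legendre_dual psi b x]].

Definition dataset d dS (Om : measurableType d)
  (S : measurableType dS) (m : nat) (X : 'I_m -> {mfun Om >-> S}) (w : Om)
  : m.-tuple S := [tuple X i w | i < m].

Definition dist_exp_risk (R : realType) dS dW (S : measurableType dS)
  (W : measurableType dW) (K : nat) (n : 'I_K -> nat)
  (pi : 'I_K -> probability S R) (loss : S * W -> R) (w : W) : \bar R :=
  \sum_(k < K) (((n k)%:R / (\sum_(j < K) n j)%:R)%R)%:E *
               \int[pi k]_s (loss (s, w))%:E.

Definition dist_emp_risk (R : realType) dS dW (S : measurableType dS)
  (W : measurableType dW) (K : nat) (n : 'I_K -> nat)
  (data : forall k : 'I_K, 'I_(n k) -> S) (loss : S * W -> R) (w : W) : R :=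
  (\sum_(k < K) ((n k)%:R / (\sum_(j < K) n j)%:R) *
     ((n k)%:R^-1 * \sum_(i < n k) loss (data k i, w)))%R.

Definition gen_error (R : realType) d dS dW (Om : measurableType d)
  (S : measurableType dS) (W : measurableType dW) (P : probability Om R)
  (K : nat) (n : 'I_K -> nat) (pi : 'I_K -> probability S R)
  (loss : S * W -> R) (X : forall k : 'I_K, 'I_(n k) -> {mfun Om >-> S})
  (What : {mfun Om >-> W}) : \bar R :=
  \int[P]_w (dist_exp_risk n pi loss (What w) -
             (dist_emp_risk (fun k i => X k i w) loss (What w))%:E).

Definition gen_sigma d (Om : measurableType d) (G : set (set Om)) :=
  <<s G >>.

Definition prod_prob (R : realType) d1 d2 (T1 : measurableType d1)
  (T2 : measurableType d2) (p : probability T1 R) (q : probability T2 R)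
  : probability (T1 * T2)%type R := (p \x q)%E.

(* Main.v *)
Require Import Defs.
From HB Require Import structures.
From mathcomp Require Import all_boot all_order all_algebra.
From mathcomp Require Import all_classical all_reals all_analysis.
From mathcomp Require Import measurable_realfun.
From mathcomp Require Import ring lra.
Import Order.TTheory GRing.Theory Num.Theory.
Local Open Scope classical_set_scope.
Local Open Scope ring_scope.
Local Open Scope ereal_scope.

Section generic.
Context d (T : measurableType d) (R : realType) (mu : {measure set T -> \bar R}).

Lemma fin_integrable (f : T -> \bar R) : measurable_fun setT f ->
  \int[mu]_x f x \is a fin_num -> mu.-integrable setT f.
Proof.
move=> mf; rewrite integralE fin_numB => /andP[hp hn].
apply/integrableP; split => //.
rewrite (_ : (fun x => `|f x|) = f^\+ \+ f^\-); last by rewrite -fune_abse.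
rewrite ge0_integralD//; last 2 first.
- exact: measurable_funepos.
- exact: measurable_funeneg.
rewrite lte_add_pinfty// ltey_eq ?hp ?hn//.
Qed.

End generic.

Section DV.
Context {d} {T : measurableType d} {R : realType} {J Q : probability T R}.
Hypothesis JQ : J `<< Q.

Local Notation RN := (Radon_Nikodym_SigmaFinite.f J Q).
Let g z := fine (RN z).

Lemma RNE z : RN z = (g z)%:E.
Proof. by rewrite /g fineK// Radon_Nikodym_SigmaFinite.f_fin_num. Qed.

Lemma g_ge0 z : (0 <= g z)%R.
Proof. by rewrite -lee_fin -RNE Radon_Nikodym_SigmaFinite.f_ge0. Qed.

Lemma mRN : measurable_fun setT RN.
Proof. exact: measurable_int (Radon_Nikodym_SigmaFinite.f_integrable JQ). Qed.

Lemma mg : measurable_fun setT g.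
Proof. exact: measurableT_comp mRN. Qed.

Let N := [set z | (g z <= 0)%R].

Lemma mN : measurable N.
Proof.
rewrite (_ : N = (fun z => (g z <= 0)%R) @^-1` [set true]); last first.
  by apply/seteqP; split => z /=.
rewrite -(setTI (_ @^-1` _)).
have := @measurable_fun_ler _ _ R setT g (cst 0%R) mg (measurable_cst _) measurableT [set true].
by apply.
Qed.

Lemma JN : J N = 0.
Proof.
rewrite (Radon_Nikodym_SigmaFinite.f_integral JQ mN).
apply: integral0_eq => z Nz.
rewrite RNE; congr EFin.
by apply/eqP; rewrite eq_le Nz g_ge0.
Qed.

Lemma mlneRN : measurable_fun setT (fun z => lne (RN z)).
Proof.
rewrite (_ : (fun z => lne (RN z)) =
  (fun z => if (g z <= 0)%R then -oo else (ln (g z))%:E)); last first.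
  by apply/funext => z; rewrite RNE.
apply: (measurable_fun_if measurableT
  (@measurable_fun_ler _ _ R setT g (cst 0%R) mg (measurable_cst _))) => //.
have mlg : measurable_fun setT (fun z => (ln (g z))%:E).
  by apply/measurable_EFinP; exact: measurableT_comp mg.
exact: measurable_funS mlg.
Qed.

Lemma KLE : KL J Q = \int[J]_z (ln (g z))%:E.
Proof.
rewrite /KL; case: pselect => [h|//].
apply: (ae_eq_integral (fun z => (ln (g z))%:E)) => //.
- exact: mlneRN.
- by apply/measurable_EFinP; apply: measurableT_comp mg.
- exists N; split; [exact: mN|exact: JN|].
  move=> z /= /not_implyP[_]; rewrite RNE /=.
  by case: ifPn => //.
Qed.


Lemma intlng : KL J Q \is a fin_num -> J.-integrable setT (fun z => (ln (g z))%:E).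
Proof.
rewrite KLE => fin; apply: fin_integrable => //.
by apply/measurable_EFinP; apply: measurableT_comp mg.
Qed.

Variable f : T -> R.
Hypotheses (mf : measurable_fun setT f) (f0 : forall z, (0 <= f z)%R)
  (intQ : Q.-integrable setT (EFin \o f)).
Variables l c : R.
Hypothesis hc : cgf Q f l <= c%:E.
Let m := fine (\int[Q]_z (f z)%:E).
Let h z := (l * (f z - m))%R.
Let phi z := expR (h z - ln (g z) - c).

Lemma mh : measurable_fun setT h.
Proof.
by apply: measurable_funM => //; apply: measurable_funB.
Qed.

Lemma mphi : measurable_fun setT phi.
Proof.
apply: measurableT_comp => //; apply: measurable_funB => //.
apply: measurable_funB; first exact: mh.
exact: measurableT_comp mg.
Qed.

Lemma Zle : \int[Q]_z (expR (h z))%:E <= (expR c)%:E.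
Proof.
move: hc; rewrite /cgf -/m.
set Z := \int[Q]_z _.
have Z0 : 0 <= Z by apply: integral_ge0 => z _; rewrite lee_fin expR_ge0.
move: Z0; case: Z => [r| |] //= r0.
case: ifPn => [r0'|]; first by move=> _; rewrite lee_fin (le_trans r0')// expR_ge0.
rewrite -ltNge => rpos; rewrite lee_fin => lnc.
by rewrite lee_fin -(lnK rpos) ler_expR.
Qed.


Lemma phi_le : \int[J]_z (phi z)%:E <= 1.
Proof.
have mphiE : measurable_fun setT (fun z => (phi z)%:E).
  exact/measurable_EFinP/mphi.
rewrite -(Radon_Nikodym_SigmaFinite.change_of_variables JQ) //; last first.
  by move=> z; rewrite lee_fin expR_ge0.
apply: (@le_trans _ _ (\int[Q]_z ((expR (- c))%:E * (expR (h z))%:E))).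
  apply: ge0_le_integral => //.
  - by move=> z _; rewrite RNE -EFinM lee_fin mulr_ge0 ?expR_ge0 ?g_ge0.
  - by apply: emeasurable_funM => //; exact: mRN.
  - apply/measurable_EFinP; apply: measurable_funM => //.
    exact: measurableT_comp mh.
  move=> z _; rewrite RNE -!EFinM lee_fin.
  have := g_ge0 z; rewrite le_eqVlt => /orP[/eqP <-|gp].
    by rewrite mulr0 mulr_ge0 ?expR_ge0.
  rewrite /phi -{2}(lnK gp) -!expRD.
  by rewrite [X in expR X]addrAC subrK addrC.
have h0 : forall z, setT z -> 0 <= (expR (h z))%:E.
  by move=> z _; rewrite lee_fin expR_ge0.
have mh' : measurable_fun setT (fun z => (expR (h z))%:E).
  by apply/measurable_EFinP; exact: measurableT_comp mh.
rewrite (ge0_integralZl_EFin _ _ h0 mh') ?expR_ge0//.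
rewrite (@le_trans _ _ ((expR (- c))%:E * (expR c)%:E))//.
  by rewrite lee_wpmul2l ?lee_fin ?expR_ge0// Zle.
by rewrite -EFinM -expRD addNr expR0.
Qed.

Lemma intphi : J.-integrable setT (fun z => (phi z)%:E).
Proof.
apply/integrableP; split; first exact/measurable_EFinP/mphi.
under eq_integral do rewrite gee0_abs ?lee_fin ?expR_ge0//.
by apply: (le_lt_trans phi_le); rewrite ltry.
Qed.


Let D := setT `\` N.
Let rhs z := (ln (g z) + phi z + (c - 1))%R.

Lemma mD : measurable D.
Proof. exact: measurableD mN. Qed.

Lemma pw z : D z -> (h z <= rhs z)%R.
Proof.
move=> [_ /= /negP]; rewrite -ltNge => gp.
have := expR_ge1Dx (h z - ln (g z) - c); rewrite /rhs /phi; lra.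
Qed.

Lemma intrhs : KL J Q \is a fin_num -> J.-integrable setT (EFin \o rhs).
Proof.
move=> fin.
have -> : EFin \o rhs = (fun z => (ln (g z))%:E + (phi z)%:E + (EFin \o cst (c - 1)%R) z).
  by apply/funext => z /=; rewrite /rhs !EFinD.
apply: integrableD => //; last exact: finite_measure_integrable_cst.
by apply: integrableD => //; [exact: intlng|exact: intphi].
Qed.

Lemma int_rhs : KL J Q \is a fin_num ->
  \int[J]_z (rhs z)%:E <= (fine (KL J Q) + c)%:E.
Proof.
move=> fin.
have -> : (fun z => (rhs z)%:E) = (fun z => (ln (g z))%:E + (phi z)%:E + (EFin \o cst (c - 1)%R) z).
  by apply/funext => z /=; rewrite /rhs !EFinD.
rewrite integralD //; last exact: finite_measure_integrable_cst.
  rewrite integralD //; [|exact: intlng|exact: intphi].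
  have -> : \int[J]_z (EFin \o cst (c - 1)%R) z = (c - 1)%:E.
    rewrite (_ : EFin \o cst (c - 1)%R = cst (c - 1)%:E)// integral_cst//.
    rewrite [X in _ * X](_ : _ = 1) ?mule1//.
    exact: probability_setT.
  rewrite -KLE.
  have -> : (fine (KL J Q) + c)%:E = KL J Q + 1 + (c - 1)%:E.
    by rewrite -(fineK fin) -!EFinD /=; congr EFin; lra.
  apply: leeD => //; apply: leeD => //; exact: phi_le.
by apply: integrableD => //; [exact: intlng|exact: intphi].
Qed.

Lemma DVh : KL J Q \is a fin_num -> J.-integrable setT (EFin \o h) ->
  \int[J]_z (h z)%:E <= (fine (KL J Q) + c)%:E.
Proof.
move=> fin inth.
rewrite (negligible_integral mN measurableT inth JN).
apply: le_trans (int_rhs fin).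
rewrite (negligible_integral mN measurableT (intrhs fin) JN).
apply: le_integral.
- exact: mD.
- by apply: (integrableS measurableT mD) => //.
- by apply: (integrableS measurableT mD) => //; exact: intrhs.
- by move=> z /set_mem Dz; rewrite lee_fin pw.
Qed.


Lemma int_f_pos : (0 < l)%R -> KL J Q \is a fin_num -> J.-integrable setT (EFin \o f).
Proof.
move=> l0 fin.
have mfE : measurable_fun setT (EFin \o f) by exact/measurable_EFinP.
apply/(negligible_integrable mN measurableT mfE JN).
pose bnd z := (l^-1 * rhs z + m)%R.
have intb : J.-integrable setT (EFin \o bnd).
  have -> : EFin \o bnd = (fun z => l^-1%:E * (rhs z)%:E + (EFin \o cst m) z).
    by apply/funext => z /=; rewrite /bnd EFinD EFinM.
  apply: integrableD => //; last exact: finite_measure_integrable_cst.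
  by apply: integrableZl => //; exact: intrhs.
apply: (@le_integrable _ _ _ _ _ mD _ (EFin \o bnd)).
- exact: measurable_funS mfE.
- move=> z Dz.
  have fb : (f z <= bnd z)%R.
    have := pw z Dz; rewrite /h /bnd -ler_pdivlMl// => H.
    by rewrite -lerBlDr.
  have bz : (0 <= bnd z)%R by exact: le_trans (f0 z) fb.
  by rewrite /comp /= lee_fin !ger0_norm.
- by apply: (integrableS measurableT mD) => //.
Qed.

Lemma DV : KL J Q \is a fin_num -> J.-integrable setT (EFin \o f) ->
  (l * (fine (\int[J]_z (f z)%:E) - m) <= fine (KL J Q) + c)%R.
Proof.
move=> fin intf.
have intm : J.-integrable setT (EFin \o cst m) by exact: finite_measure_integrable_cst.
have inth : J.-integrable setT (EFin \o h).
  have -> : EFin \o h = (fun z => l%:E * ((f z)%:E - (EFin \o cst m) z)).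
    by apply/funext => z /=; rewrite /h EFinM EFinB.
  by apply: (integrableZl measurableT); exact: (integrableB measurableT intf intm).
have := DVh fin inth.
have -> : \int[J]_z (h z)%:E = (l * (fine (\int[J]_z (f z)%:E) - m))%:E.
  rewrite (_ : (fun z => (h z)%:E) = (fun z => l%:E * ((f z)%:E - (EFin \o cst m) z))); last first.
    by apply/funext => z /=; rewrite /h EFinM EFinB.
  rewrite integralZl//; last exact: (integrableB measurableT intf intm).
  rewrite integralB//.
  have -> : \int[J]_z (EFin \o cst m) z = m%:E.
    rewrite (_ : EFin \o cst m = cst m%:E)// integral_cst//.
    rewrite [X in _ * X](_ : _ = 1) ?mule1//.
    exact: probability_setT.
  by rewrite EFinM EFinB (fineK (@integrable_fin_num _ _ _ J setT measurableT _ intf)).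
by rewrite lee_fin.
Qed.

End DV.

Section KLpos.
Context d (T : measurableType d) (R : realType) (J Q : probability T R).

Lemma KL_neqNy : KL J Q != -oo.
Proof.
have [JQ|nJQ] := pselect (J `<< Q); last first.
  by rewrite /KL; case: pselect.
rewrite (KLE JQ).
set g := fun z => fine (Radon_Nikodym_SigmaFinite.f J Q z).
have mF : measurable_fun setT (fun z => (ln (g z))%:E).
  by apply/measurable_EFinP; apply: measurableT_comp (mg JQ).
rewrite integralE.
have neg : \int[J]_z (fun z => (ln (g z))%:E)^\- z < +oo.
  have f0' : forall z, 0 <= (fun z => (ln (g z))%:E)^\- z by move=> z; rewrite funeneg_ge0.
  rewrite -(Radon_Nikodym_SigmaFinite.change_of_variables JQ f0' measurableT (measurable_funeneg mF)).
  apply: (@le_lt_trans _ _ (\int[Q]_z (cst 1 z))); last first.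
    by rewrite integral_cst// [X in _ * X](_ : _ = 1) ?mule1 ?ltry//; exact: probability_setT.
  apply: ge0_le_integral => //.
  - by move=> z _; rewrite mule_ge0// ?funeneg_ge0// Radon_Nikodym_SigmaFinite.f_ge0.
  - apply: emeasurable_funM; first exact: measurable_funeneg.
    exact: mRN.
  move=> z _; rewrite (RNE JQ) -/(g z) funenegE /=.
  have := g_ge0 JQ z; rewrite -/(g z) le_eqVlt => /orP[/eqP <-|gp].
    by rewrite mule0.
  rewrite -EFin_max -EFinM lee_fin.
  have [lnp|lnn] := leP 0%R (ln (g z)).
    by rewrite (_ : Num.max _ _ = 0%R) ?mul0r// ; apply/max_idPr; rewrite oppr_le0.
  rewrite (_ : Num.max _ _ = - ln (g z))%R; last by apply/max_idPl; rewrite oppr_ge0 ltW.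
  have := expR_ge1Dx (- ln (g z)).
  rewrite expRN lnK// => H.
  have : (g z * (1 - ln (g z)) <= g z * (g z)^-1)%R by rewrite ler_pM2l.
  rewrite mulfV ?gt_eqF//; nra.
move: neg; set a := \int[J]_z _^\+ z; set b := \int[J]_z _^\- z.
have a0 : 0 <= a by apply: integral_ge0 => z _; rewrite funepos_ge0.
have b0 : 0 <= b by apply: integral_ge0 => z _; rewrite funeneg_ge0.
move: a0 b0; case: a => [x| |]; case: b => [y| |] //.
Qed.

End KLpos.

Section term.
Context {d} {T : measurableType d} {R : realType} {J Q : probability T R}.
Variable f : T -> R.
Hypotheses (mf : measurable_fun setT f) (f0 : forall z, (0 <= f z)%R)
  (intQ : Q.-integrable setT (EFin \o f)).
Variables (psi : R -> R) (b : \bar R).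
Hypothesis KLfin : KL J Q \is a fin_num.

Lemma JQ_of_fin : J `<< Q.
Proof. by move: KLfin; rewrite /KL; case: pselect. Qed.

Lemma term_int (s : R) : (0 < s)%R -> 0 < b ->
  (forall l, (0 <= l)%R -> l%:E < b -> cgf Q f (s * l) <= (psi l)%:E) ->
  J.-integrable setT (EFin \o f).
Proof.
move=> s0 b0 hb.
have [l [l0 lb]] : exists l : R, (0 < l)%R /\ l%:E < b.
  move: b0; case: b => [r| |] //.
    by rewrite lte_fin => r0; exists (r / 2)%R; split; [rewrite divr_gt0|rewrite lte_fin; lra].
  by move=> _; exists 1%R; split; [exact: ltr01|exact: ltry].
have hc := hb l (ltW l0) lb.
exact: (@int_f_pos _ _ _ J Q JQ_of_fin f mf f0 (s * l) (psi l) hc (mulr_gt0 s0 l0) KLfin).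
Qed.

Lemma term_bound (s : R) : (s = 1 \/ s = -1)%R ->
  (forall l, (0 <= l)%R -> l%:E < b -> cgf Q f (s * l) <= (psi l)%:E) ->
  J.-integrable setT (EFin \o f) ->
  (s * (fine (\int[J]_z (f z)%:E) - fine (\int[Q]_z (f z)%:E)))%:E
    <= legendre_dual_inv psi b (KL J Q).
Proof.
move=> hs hb intf.
rewrite /legendre_dual_inv; apply: le_ereal_inf_tmp => _ [x [x0 hx] <-].
have [_ [l [l0 lb] <-] KLlt] := ereal_sup_gt hx.
have := @DV _ _ _ J Q JQ_of_fin f mf (s * l) (psi l) (hb l l0 lb) KLfin intf.
move: KLlt; rewrite -(fineK KLfin) lte_fin => KLlt.
set E := (fine _ - fine _)%R => H.
have H2 : (l * (s * E) < l * x)%R by rewrite mulrA; lra.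
rewrite lee_fin.
move: l0; rewrite le_eqVlt => /orP[/eqP l0|lp].
  by move: H2; rewrite -l0 !mul0r ltxx.
by apply: ltW; rewrite -(ltr_pM2l lp).
Qed.

End term.

Section pair.
Context {R : realType} {dO dS dW : measure_display} {Om : measurableType dO}
  {S : measurableType dS} {W : measurableType dW} (P : probability Om R).
Variables (loss : S * W -> R) (pik : probability S R)
  (Xs : {mfun Om >-> S}) (What : {mfun Om >-> W}).
Hypotheses (mloss : measurable_fun setT loss) (loss0 : forall z, (0 <= loss z)%R).
Hypothesis Xlaw : forall A, measurable A -> P (Xs @^-1` A) = pik A.
Let Qk := prod_prob pik (distribution P What).
Hypothesis intQk : Qk.-integrable setT (EFin \o loss).
Let Q' := ((distribution P Xs \x distribution P What)%E : probability _ R).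
Let J := distribution P (pairRV Xs What).

Lemma Qagree A : measurable A -> Q' A = Qk A.
Proof.
move=> mA; rewrite /Q' /Qk /prod_prob /= /product_measure1.
by apply: eq_measure_integral => B mB _; rewrite /= /distribution /pushforward Xlaw.
Qed.

Lemma eqQ (F : S * W -> \bar R) : \int[Q']_z F z = \int[Qk]_z F z.
Proof.
apply: eq_measure_integral => A mA _.
exact: Qagree.
Qed.


Lemma intQ' : Q'.-integrable setT (EFin \o loss).
Proof.
move/integrableP : intQk => [mf fin]; apply/integrableP; split => //.
by rewrite eqQ.
Qed.

Lemma cgfQ l : cgf Q' loss l = cgf Qk loss l.
Proof. by rewrite /cgf !eqQ. Qed.

Lemma mloss' : measurable_fun setT (fun w => (loss (Xs w, What w))%:E).
Proof.
apply/measurable_EFinP; apply: measurableT_comp => //.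
exact: (measurable_funP (pairRV Xs What)).
Qed.

Lemma EJ : \int[J]_z (loss z)%:E = \int[P]_w (loss (Xs w, What w))%:E.
Proof.
rewrite /J ge0_integral_distribution//.
all: try (by apply/measurable_EFinP).
all: try (by move=> z; rewrite lee_fin).
Qed.

Lemma intJ_P : J.-integrable setT (EFin \o loss) ->
  P.-integrable setT (fun w => (loss (Xs w, What w))%:E).
Proof.
move/integrableP => [_ fin]; apply/integrableP; split; first exact: mloss'.
move: fin; rewrite /J ge0_integral_distribution//.
apply: measurableT_comp => //; exact/measurable_EFinP.
Qed.

Lemma pair_int (psi : R -> R) (b : \bar R) :
  mutual_info P Xs What \is a fin_num -> 0 < b ->
  (forall l, (0 <= l)%R -> l%:E < b -> cgf Qk loss l <= (psi l)%:E) ->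
  P.-integrable setT (fun w => (loss (Xs w, What w))%:E).
Proof.
move=> fin b0 hb; apply: intJ_P.
apply: (@term_int _ _ _ J Q' loss mloss loss0 psi b fin 1%R ltr01 b0).
by move=> l l0 lb; rewrite mul1r cgfQ; exact: hb.
Qed.

Lemma pair_bound (psi : R -> R) (b : \bar R) (s : R) : (s = 1 \/ s = -1)%R ->
  mutual_info P Xs What \is a fin_num ->
  (forall l, (0 <= l)%R -> l%:E < b -> cgf Qk loss (s * l) <= (psi l)%:E) ->
  P.-integrable setT (fun w => (loss (Xs w, What w))%:E) ->
  (s * (fine (\int[P]_w (loss (Xs w, What w))%:E) - fine (\int[Qk]_z (loss z)%:E)))%:E
    <= legendre_dual_inv psi b (mutual_info P Xs What).
Proof.
move=> hs fin hb intP.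
have intJ : J.-integrable setT (EFin \o loss).
  apply/integrableP; split; first exact/measurable_EFinP.
  rewrite /J ge0_integral_distribution//; last first.
    by apply: measurableT_comp => //; exact/measurable_EFinP.
  by move/integrableP : intP => [].
have := @term_bound _ _ _ J Q' loss mloss psi b fin s hs _ intJ.
rewrite EJ -eqQ; apply.
by move=> l l0 lb; rewrite cgfQ; exact: hb.
Qed.

End pair.


Lemma MI_neqNy (R : realType) d d1 d2 (T : measurableType d)
  (T1 : measurableType d1) (T2 : measurableType d2) (P : probability T R)
  (X : {mfun T >-> T1}) (Y : {mfun T >-> T2}) : mutual_info P X Y != -oo.
Proof. exact: KL_neqNy. Qed.

Lemma meanQk {R : realType} {dO dS dW : measure_display} {Om : measurableType dO}
  {S : measurableType dS} {W : measurableType dW} (P : probability Om R)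
  (loss : S * W -> R) (pik : probability S R) (What : {mfun Om >-> W}) :
  measurable_fun setT loss -> (forall z, (0 <= loss z)%R) ->
  \int[prod_prob pik (distribution P What)]_z (loss z)%:E =
  \int[P]_w (\int[pik]_x (loss (x, What w))%:E).
Proof.
move=> mloss loss0.
have mL : measurable_fun setT (EFin \o loss) by exact/measurable_EFinP.
have L0 : forall z, 0 <= (EFin \o loss) z by move=> z; rewrite lee_fin.
rewrite /prod_prob.
apply: eq_trans (@fubini_tonelli2 _ _ _ _ _ pik (distribution P What) _ mL L0) _.
rewrite ge0_integral_distribution//.
- exact: measurable_fun_fubini_tonelli_G.
- by move=> y; apply: integral_ge0 => x _; rewrite lee_fin.
Qed.

Lemma leg0 (R : realType) (psi : R -> R) b y : 0 <= legendre_dual_inv psi b y.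
Proof. by apply: le_ereal_inf_tmp => _ [x [x0 _] <-]; rewrite lee_fin. Qed.

Lemma legoo (R : realType) (psi : R -> R) b : legendre_dual_inv psi b +oo = +oo.
Proof.
rewrite /legendre_dual_inv; apply/ereal_inf_pinfty.
move=> y [x [_ h] _]; move: h; by rewrite ltNge leey.
Qed.

Theorem theorem2 (R : realType) (dO dS dW : measure_display)
  (Om : measurableType dO) (S : measurableType dS) (W : measurableType dW)
  (P : probability Om R)
  (loss : S * W -> R)
  (K : nat) (n : 'I_K -> nat)
  (pi : 'I_K -> probability S R)
  (X : forall k : 'I_K, 'I_(n k) -> {mfun Om >-> S})
  (kappa : forall k : 'I_K, R.-pker (n k).-tuple S ~> W)
  (Wk : 'I_K -> {mfun Om >-> W})
  (fusion : R.-pker K.-tuple W ~> W)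
  (What : {mfun Om >-> W})
  (bp bm : 'I_K -> \bar R) (psip psim : 'I_K -> R -> R) :
  (* nonnegative (measurable) loss *)
  measurable_fun setT loss ->
  (forall z, (0 <= loss z)%R) ->
  (* S_{k,i} ~ pi_k *)
  (forall k i A, measurable A -> P (X k i @^-1` A) = pi k A) ->
  (* all samples S_{k,i} are mutually independent *)
  (forall A : {k : 'I_K & 'I_(n k)} -> set S, (forall j, measurable (A j)) ->
     P (\big[setI/setT]_j (X (projT1 j) (projT2 j) @^-1` A j)) =
     \prod_j P (X (projT1 j) (projT2 j) @^-1` A j)) ->
  (* user k: W_k ~ P_{W_k | S_k} = kappa k, given all data and the other users *)
  (forall k A E, measurable A ->
     gen_sigma [set F | (exists j i B, measurable B /\ F = X j i @^-1` B) \/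
                        (exists j B, j != k /\ measurable B /\ F = Wk j @^-1` B)] E ->
     P (Wk k @^-1` A `&` E) = \int[P]_(w in E) kappa k (dataset (X k) w) A) ->
  (* fusion: W^ ~ P_{W^ | W_1, ..., W_K} = fusion, given all data and all W_k *)
  (forall B E, measurable B ->
     gen_sigma [set F | (exists j i C, measurable C /\ F = X j i @^-1` C) \/
                        (exists j C, measurable C /\ F = Wk j @^-1` C)] E ->
     P (What @^-1` B `&` E) = \int[P]_(w in E) fusion [tuple Wk j w | j < K] B) ->
  (* l(S^_k, W^-) has a finite mean under pi_k (x) P_{W^} (so Lambda_k is defined) *)
  (forall k, (prod_prob (pi k) (distribution P What)).-integrable setT
               (fun z => (loss z)%:E)) ->
  (* b_{k+-} in (0, oo] *)
  (forall k, 0 < bp k) -> (forall k, 0 < bm k) ->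
  (* psi_{k+-} : [0, b_{k+-}) -> R convex, psi(0) = psi'(0) = 0 *)
  (forall k, convex_on_0b (psip k) (bp k)) ->
  (forall k, convex_on_0b (psim k) (bm k)) ->
  (forall k, psip k 0%R = 0%R) -> (forall k, psim k 0%R = 0%R) ->
  (forall k, right_deriv0_is0 (psip k)) ->
  (forall k, right_deriv0_is0 (psim k)) ->
  (* Lambda_k(l) <= psi_{k+}(l) on [0, b_{k+}) *)
  (forall k (l : R), (0 <= l)%R -> l%:E < bp k ->
     cgf (prod_prob (pi k) (distribution P What)) loss l <= (psip k l)%:E) ->
  (* Lambda_k(l) <= psi_{k-}(-l) on (-b_{k-}, 0] *)
  (forall k (l : R), (l <= 0)%R -> (- l)%:E < bm k ->
     cgf (prod_prob (pi k) (distribution P What)) loss l <= (psim k (- l))%:E) ->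
  - ((((\sum_(k < K) n k)%:R)^-1)%R%:E *
      \sum_(k < K) \sum_(i < n k)
        legendre_dual_inv (psip k) (bp k) (mutual_info P (X k i) What))
    <= gen_error P pi loss X What /\
  gen_error P pi loss X What <=
    (((\sum_(k < K) n k)%:R)^-1)%R%:E *
      \sum_(k < K) \sum_(i < n k)
        legendre_dual_inv (psim k) (bm k) (mutual_info P (X k i) What).

Proof.
move=> mloss loss0 Xlaw _ _ _ intQ bp0 bm0 _ _ _ _ _ _ hp hm.
set NN := (\sum_(k < K) n k)%N.
have [allfin|notall] := pselect (forall k (i : 'I_(n k)),
  mutual_info P (X k i) What \is a fin_num); last first.
  move/existsNP: notall => [k0]; move/existsNP => [i0 nfin].
  have MIoo : mutual_info P (X k0 i0) What = +oo.
    move/negP: nfin; rewrite fin_numE negb_and !negbK => /orP[/eqP h|/eqP //].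
    by move: (MI_neqNy _ _ _ _ _ _ _ P (X k0 i0) What); rewrite h.
  have NN0 : (0 < NN)%N.
    rewrite /NN (bigD1 k0) //= addn_gt0.
    by rewrite (leq_ltn_trans (leq0n i0) (ltn_ord i0)).
  have nNy : forall x : \bar R, 0 <= x -> x != -oo by move=> [x| |].
  have sumoo : forall L : forall k, 'I_(n k) -> \bar R, (forall k i, 0 <= L k i) ->
      L k0 i0 = +oo -> \sum_(k < K) \sum_(i < n k) L k i = +oo.
    move=> L L0 Loo; apply/eqP; rewrite -leye_eq.
    rewrite (bigD1 k0)//= (bigD1 i0)//= Loo addye ?addye//.
    - by apply: nNy; apply: sume_ge0 => k _; apply: sume_ge0.
    - by apply: nNy; apply: sume_ge0.
  have cpos : (0 < ((NN%:R)^-1 : R))%R by rewrite invr_gt0 ltr0n.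
  split.
    rewrite (sumoo (fun k i => legendre_dual_inv (psip k) (bp k) (mutual_info P (X k i) What))).
    - by rewrite gt0_muley ?lte_fin// leNye.
    - by move=> k i; exact: leg0.
    - by rewrite MIoo legoo.
  rewrite (sumoo (fun k i => legendre_dual_inv (psim k) (bm k) (mutual_info P (X k i) What))).
  - by rewrite gt0_muley ?lte_fin// leey.
  - by move=> k i; exact: leg0.
  - by rewrite MIoo legoo.
pose Qk k := prod_prob (pi k) (distribution P What).
pose mk k := fine (\int[Qk k]_z (loss z)%:E).
pose Ek k (i : 'I_(n k)) := fine (\int[P]_w (loss (X k i w, What w))%:E).
have intL : forall k (i : 'I_(n k)),
    P.-integrable setT (fun w => (loss (X k i w, What w))%:E).
  move=> k i.
  exact: (pair_int P loss (pi k) (X k i) What mloss loss0 (Xlaw k i) (psip k) (bp k)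
    (allfin k i) (bp0 k) (hp k)).
have bnd_p : forall k (i : 'I_(n k)), (Ek k i - mk k)%:E <=
    legendre_dual_inv (psip k) (bp k) (mutual_info P (X k i) What).
  move=> k i.
  have := pair_bound P loss (pi k) (X k i) What mloss loss0 (Xlaw k i) (psip k) (bp k)
    1%R (or_introl erefl) (allfin k i).
  rewrite mul1r; apply => //.
  by move=> l l0 lb; rewrite mul1r; exact: hp.
have bnd_m : forall k (i : 'I_(n k)), (mk k - Ek k i)%:E <=
    legendre_dual_inv (psim k) (bm k) (mutual_info P (X k i) What).
  move=> k i.
  have := pair_bound P loss (pi k) (X k i) What mloss loss0 (Xlaw k i) (psim k) (bm k)
    (-1)%R (or_intror erefl) (allfin k i).
  rewrite mulN1r opprB; apply => //.
  move=> l l0 lb; have := hm k (-1 * l)%R.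
  rewrite mulN1r opprK oppr_le0; exact.
pose G k w := \int[pi k]_s (loss (s, What w))%:E.
have meanG : forall k, \int[P]_w G k w = (mk k)%:E.
  move=> k; rewrite /G /mk -meanQk// fineK//.
  exact: (integrable_fin_num measurableT (intQ k)).
have G0 : forall k w, 0 <= G k w.
  by move=> k w; apply: integral_ge0 => s _; rewrite lee_fin.
have intG : forall k, P.-integrable setT (G k).
  move=> k; apply/integrableP; split.
    have mL : measurable_fun setT (EFin \o loss) by exact/measurable_EFinP.
    have L0 : forall z, 0 <= (EFin \o loss) z by move=> z; rewrite lee_fin.
    apply: (measurableT_comp (measurable_fun_fubini_tonelli_G (m1 := pi k) _ mL L0)).
    exact: measurable_funP.
  under eq_integral do rewrite gee0_abs ?G0//.
  by rewrite meanG ltry.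
have EkE : forall k (i : 'I_(n k)),
    \int[P]_w (loss (X k i w, What w))%:E = (Ek k i)%:E.
  by move=> k i; rewrite fineK//; exact: (integrable_fin_num measurableT (intL k i)).
have genE : gen_error P pi loss X What =
    (((NN%:R)^-1 : R) * \sum_(k < K) \sum_(i < n k) (mk k - Ek k i))%:E.
  rewrite /gen_error.
  transitivity (\int[P]_w (\sum_(k < K) (((n k)%:R / NN%:R)%R)%:E * G k w
     - \sum_(k < K) \sum_(i < n k) (((n k)%:R / NN%:R * (n k)%:R^-1)%R)%:E
        * (loss (X k i w, What w))%:E)).
    apply: eq_integral => w _; rewrite /dist_exp_risk /dist_emp_risk; congr (_ - _).
    rewrite -sumEFin; apply: eq_bigr => k _.
    rewrite mulrA mulr_sumr -sumEFin; apply: eq_bigr => i _.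
    by rewrite EFinM.
  have intA : P.-integrable setT (fun w => \sum_(k < K) (((n k)%:R / NN%:R)%R)%:E * G k w).
    by apply: (integrable_sum measurableT) => k _; apply: integrableZl => //; exact: intG.
  have intB : P.-integrable setT (fun w => \sum_(k < K) \sum_(i < n k)
      (((n k)%:R / NN%:R * (n k)%:R^-1)%R)%:E * (loss (X k i w, What w))%:E).
    apply: (integrable_sum measurableT) => k _; apply: (integrable_sum measurableT) => i _.
    by apply: integrableZl => //; exact: intL.
  rewrite (integralB measurableT intA intB).
  rewrite integral_sum //; last by move=> k; apply: integrableZl => //; exact: intG.
  rewrite integral_sum //; last first.
    move=> k; apply: (integrable_sum measurableT) => i _.
    by apply: integrableZl => //; exact: intL.

  under eq_bigr => k _ do rewrite (integralZl measurableT (intG k)) meanG -EFinM.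
  have inner : forall k, \int[P]_x (\sum_(i < n k) (((n k)%:R / NN%:R * (n k)%:R^-1)%R)%:E
        * (loss (X k i x, What x))%:E) =
      (\sum_(i < n k) ((n k)%:R / NN%:R * (n k)%:R^-1 * Ek k i))%:E.
    move=> k; rewrite integral_sum //; last first.
      by move=> i; apply: integrableZl => //; exact: intL.
    rewrite -sumEFin; apply: eq_bigr => i _.
    by rewrite (integralZl measurableT (intL k i)) EkE -EFinM.
  under [X in _ - X]eq_bigr => k _ do rewrite inner.
  rewrite !sumEFin -EFinB; congr EFin.
  rewrite mulr_sumr -sumrB; apply: eq_bigr => k _.
  rewrite sumrB sumr_const card_ord.
  have [nk0|nk0] := eqVneq (n k) 0%N.
    rewrite big1; last by move=> [i hi] _; exfalso; rewrite nk0 in hi.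
    rewrite big1; last by move=> [i hi] _; exfalso; rewrite nk0 in hi.
    by rewrite nk0 !mul0r mulr0n subr0 mulr0.
  have NN0 : (NN%:R != 0 :> R)%R.
    rewrite pnatr_eq0 -lt0n /NN (bigD1 k) //= addn_gt0.
    by rewrite lt0n nk0.
  have nk0' : ((n k)%:R != 0 :> R)%R by rewrite pnatr_eq0.
  rewrite -mulr_sumr -mulr_natr.
  field.
  by rewrite nk0' NN0.
rewrite genE; split.
  rewrite leeNl -EFinN.
  have -> : (- ((NN%:R)^-1 * \sum_(k < K) \sum_(i < n k) (mk k - Ek k i)))%R =
      ((NN%:R)^-1 * \sum_(k < K) \sum_(i < n k) (Ek k i - mk k))%R.
    rewrite -mulrN -sumrN; congr (_ * _)%R; apply: eq_bigr => k _.
    by rewrite -sumrN; apply: eq_bigr => i _; rewrite opprB.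
  rewrite EFinM -sumEFin.
  under eq_bigr do rewrite -sumEFin.
  apply: lee_wpmul2l; first by rewrite lee_fin invr_ge0.
  by apply: lee_sum => k _; apply: lee_sum => i _; exact: bnd_p.
rewrite EFinM -sumEFin.
under eq_bigr do rewrite -sumEFin.
apply: lee_wpmul2l; first by rewrite lee_fin invr_ge0.
by apply: lee_sum => k _; apply: lee_sum => i _; exact: bnd_m.
Qed.
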